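(* Let $(X,\alpha,T)$ be a dynamical system with $T=\mathbb{Z}$ or $T=\mathbb{R}$ acting by homeomorphisms on a compact metrizable space $X$. Then $\mathcal M=\mathcal M^+\cup\mathcal M^-$, and $\mathcal M^+$ and $\mathcal M^-$ are left ideals of $E$.
   Context: $\alpha^t$ are homeomorphisms with $\alpha^{s+t}=\alpha^s\circ\alpha^t$, $\alpha^0=\mathrm{id}$. $E$ is the closure of $\{\alpha^t:t\in T\}$ in $X^X$ (pointwise convergence topology, composition), $E^+$ and $E^-$ the closures of $\{\alpha^t: t\ge0\}$ and $\{\alpha^t:t\le0\}$. $\mathcal M$, $\mathcal M^+$, $\mathcal M^-$ denote the kernels (unique minimal two-sided ideals) of $E$, $E^+$, $E^-$. A left ideal of $S$ is a non-empty $I\subset S$ with $SI\subset I$. *)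

(* Defs.v *)
From HB Require Import structures.
From mathcomp Require Import all_boot all_order all_algebra.
From mathcomp Require Import all_classical all_reals all_analysis.
Set Implicit Arguments. Unset Strict Implicit. Unset Printing Implicit Defensive.
Import Order.TTheory GRing.Theory Num.Theory.
Local Open Scope classical_set_scope.
Local Open Scope ring_scope.

Definition is_flow (T : zmodType) (X : topologicalType) (alpha : T -> X -> X) : Prop :=
  (forall t, continuous (alpha t) /\
     exists g : X -> X, [/\ continuous g, cancel (alpha t) g & cancel g (alpha t)])
  /\ (forall s t, alpha (s + t) = alpha s \o alpha t)
  /\ alpha 0 = id.

Definition envelope (T : Type) (X : topologicalType) (alpha : T -> X -> X)
  (P : set T) : set {ptws X -> X} :=
  closure [set (alpha t : {ptws X -> X}) | t in P].

Definition left_ideal (X : Type) (S I : set (X -> X)) : Prop :=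
  I !=set0 /\ I `<=` S /\ (forall s i, S s -> I i -> I (s \o i)).

Definition two_sided_ideal (X : Type) (S I : set (X -> X)) : Prop :=
  left_ideal S I /\ (forall i s, I i -> S s -> I (i \o s)).

Definition minimal_two_sided_ideal (X : Type) (S I : set (X -> X)) : Prop :=
  two_sided_ideal S I /\ (forall J, two_sided_ideal S J -> J `<=` I -> J = I).

(* Main.v *)
Require Import Defs.
From HB Require Import structures.
From mathcomp Require Import all_boot all_order all_algebra.
From mathcomp Require Import all_classical all_reals all_analysis.
Import Order.TTheory GRing.Theory Num.Theory.
Local Open Scope classical_set_scope.
Local Open Scope ring_scope.
Set Implicit Arguments. Unset Strict Implicit. Unset Printing Implicit Defensive.

Lemma closure_image_sub (S U : topologicalType) (f : S -> U) (A : set S) (B : set U) :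
  continuous f -> closed B -> (forall a, A a -> B (f a)) ->
  forall p, closure A p -> B (f p).
Proof.
move=> fc cB AB p clp; apply: cB => V nV.
have := clp _ (fc p _ nV); case=> a [Aa Va]; exists (f a); split => //; exact: AB.
Qed.

Lemma closure_eq_cont (S U : topologicalType) (f g : S -> U) (A : set S) :
  hausdorff_space U -> continuous f -> continuous g -> (forall a, A a -> f a = g a) ->
  forall p, closure A p -> f p = g p.
Proof.
move=> hU fc gc fg p clp; apply: hU => V W nV nW.
have nVW : nbhs p (f @^-1` V `&` g @^-1` W) by apply: filterI; [exact: fc | exact: gc].
have [a [Aa [Va Wa]]] := clp _ nVW.
by exists (f a); split => //; rewrite fg.
Qed.

Section Ptws.
Variable (X : uniformType).
Local Notation PT := {ptws X -> X}.

Lemma rcomp_cont (q : X -> X) : continuous (fun p : PT => (p \o q : PT)).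
Proof.
move=> p; apply/(@pointwise_cvgP X X _ (p \o q) (fmap_filter _ (@nbhs_filter PT p))) => t.
have : (nbhs p) --> (p : PT) by exact: cvg_id.
by move/(@pointwise_cvgP X X _ p _)=> /(_ (q t)).
Qed.

Lemma lcomp_cont (f : X -> X) : continuous f -> continuous (fun p : PT => (f \o p : PT)).
Proof.
move=> fc p; apply/(@pointwise_cvgP X X _ (f \o p) (fmap_filter _ (@nbhs_filter PT p))) => t.
have : (nbhs p) --> (p : PT) by exact: cvg_id.
move/(@pointwise_cvgP X X _ p _)=> /(_ t) h.
apply: (cvg_comp _ _ h); exact: fc.
Qed.

Lemma ptws_hausdorff : hausdorff_space X -> hausdorff_space PT.
Proof. by move=> hX; apply: hausdorff_product. Qed.

Lemma ptws_compact : compact [set: X] -> compact [set: PT].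
Proof.
move=> cX; have := @tychonoff X (fun _ => X) (fun _ => setT) (fun _ => cX).
by congr compact; apply/seteqP; split.
Qed.
End Ptws.

Definition minL (X : Type) (S L : set (X -> X)) :=
  left_ideal S L /\ forall J, left_ideal S J -> J `<=` L -> J = L.

Section Semi.
Variable (X : uniformType).
Local Notation PT := {ptws X -> X}.
Variable E : set (X -> X).
Hypothesis sgE : forall p q, E p -> E q -> E (p \o q).
Hypothesis nE : E !=set0.
Hypothesis hX : hausdorff_space X.
Hypothesis cX : compact [set: X].
Hypothesis clE : closed (E : set PT).

Lemma compE : compact (E : set PT).
Proof. exact: (subclosed_compact clE (ptws_compact cX)). Qed.

Lemma closed_Ep p : closed ([set e \o p | e in E] : set PT).
Proof.
apply: compact_closed; first exact: ptws_hausdorff.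
have -> : ([set e \o p | e in E] : set PT) = (fun e : PT => (e \o p : PT)) @` (E : set PT) by [].
apply: continuous_compact; last exact: compE.
apply: continuous_subspaceT; exact: rcomp_cont.
Qed.

Lemma exists_minL : exists L, minL E L.
Proof.
pose P (A : set (X -> X)) := left_ideal E (E `&` ~` A) /\ closed (E `&` ~` A : set PT).
have [|A [PA Amax]] := @Zorn_bigcup _ P.
  move=> F FP Ftot; set U := \bigcup_(A in F) A.
  have clo : closed (E `&` ~` U : set PT).
    have -> : E `&` ~` U = E `&` \bigcap_(A in F) (E `&` ~` A).
      apply/seteqP; split => x.
        move=> [Ex nU]; split => // A FA; split => // Ax; apply: nU; by exists A.
      move=> [Ex H]; split => // -[A FA Ax]; by have [_ ] := H A FA.
    apply: closedI => //; apply: closed_bigI => A FA; exact: (FP A FA).2.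
  split => //; split; last split.
  - have [[A0 FA0]|F0] := pselect (F !=set0); last first.
      have [e Ee] := nE; exists e; split => // -[A FA _]; apply: F0; by exists A.
    pose G := filter_from F (fun A => E `&` ~` A).
    have GF : ProperFilter G.
      apply: filter_from_proper; last by move=> A FA; exact: (FP A FA).1.1.
      apply: filter_from_filter; first by exists A0.
      move=> A B FA FB; have [AB|BA] := Ftot A B FA FB.
        exists B => // x [Ex nBx]; split; split => // Ax; exact/nBx/AB.
      exists A => // x [Ex nAx]; split; split => // Bx; exact/nAx/BA.
    have GE : G (E : set PT) by exists A0 => // x [].
    have [p [Ep clp]] := compE GF GE.
    exists p; split => // -[A FA Ap].
    have : (E `&` ~` A) p.
      apply: (FP A FA).2 => V nV; apply: (clp (E `&` ~` A)) => //; by exists A.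
    by case.
  - by move=> x [].
  - move=> s x Es [Ex nUx]; split; first exact: sgE.
    move=> [A FA Asx].
    have : (E `&` ~` A) x by split => // Ax; apply: nUx; exists A.
    move=> /((FP A FA).1.2.2 s _ Es) [_]; by apply.
set L := E `&` ~` A.
have LEp : forall p, L p -> L = [set e \o p | e in E].
  move=> p Lp; set Ep := [set e \o p | e in E].
  have EpL : Ep `<=` L by move=> _ [e Ee <-]; exact: PA.1.2.2.
  have PB : P (~` Ep).
    rewrite /P setCK; have -> : E `&` Ep = Ep.
      apply/seteqP; split => [x [] //|x Epx]; split => //; exact: PA.1.2.1 (EpL _ Epx).
    split; last exact: closed_Ep.
    split; first by exists (p \o p); exists p => //; exact: PA.1.2.1.
    split; first by move=> _ [e Ee <-]; apply: sgE => //; exact: PA.1.2.1.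
    by move=> s _ Es [e Ee <-]; exists (s \o e) => //; exact: sgE.
  have AB : A `<=` ~` Ep by move=> x Ax /EpL [_]; apply.
  have BA : ~` Ep `<=` A.
    apply: contrapT => nBA; exact: (Amax (~` Ep) (conj AB nBA) PB).
  apply/seteqP; split => // x Lx; apply: contrapT => nEpx.
  by case: Lx => _; apply; exact: BA.
exists L; split; first exact: PA.1.
move=> J [[p Jp] [JE Jl]] JL; apply/seteqP; split => // x.
rewrite (LEp p (JL _ Jp)) => -[e Ee <-]; exact: Jl.
Qed.

Lemma minL_right L s : minL E L -> E s -> minL E [set l \o s | l in L].
Proof.
move=> [[[l0 Ll0] [LE Ll]] Lmin] Es; split.
  split; first by exists (l0 \o s); exists l0.
  split; first by move=> _ [l Ll' <-]; apply: sgE => //; exact: LE.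
  by move=> t _ Et [l Ll' <-]; exists (t \o l) => //; exact: Ll.
move=> J [[j Jj] [JE Jl]] JLs; apply/seteqP; split => // _ [l Ll' <-].
pose J' := [set x | L x /\ J (x \o s)].
have J'L : J' = L.
  apply: Lmin => //; last by move=> x [].
  split.
    have [l1 Ll1 e1] := JLs _ Jj; exists l1; split => //; by rewrite e1.
  split; first by move=> x [/LE].
  by move=> t x Et [Lx Jx]; split; [exact: Ll | exact: (Jl t (x \o s))].
by have [] : J' l by rewrite J'L.
Qed.

Lemma minL_gen L y : minL E L -> L y -> L = [set e \o y | e in E].
Proof.
move=> [[_ [LE Ll]] Lmin] Ly; apply/esym/Lmin.
  split; first by exists (y \o y); exists y => //; exact: LE.
  split; first by move=> _ [e Ee <-]; apply: sgE => //; exact: LE.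
  by move=> s _ Es [e Ee <-]; exists (s \o e) => //; exact: sgE.
by move=> _ [e Ee <-]; exact: Ll.
Qed.

Lemma M_in_minL M : minimal_two_sided_ideal E M ->
  forall m, M m -> exists2 L, minL E L & L m.
Proof.
move=> [[[[m0 Mm0] [ME Ml]] Mr] Mmin].
pose K := [set x | exists2 L, minL E L & L x].
have [L0 L0min] := exists_minL.
have [[l0 Ll0] [L0E L0l]] := L0min.1.
have KM : M `&` K = M.
  apply: Mmin; last by move=> x [].
  split; first split.
  - exists (m0 \o l0); split; first exact: Mr (L0E _ Ll0).
    by exists L0 => //; apply: L0l => //; exact: ME.
  - split; first by move=> x [/ME].
    move=> s x Es [Mx [L Lmin Lx]]; split; first exact: Ml.
    by exists L => //; exact: Lmin.1.2.2.
  - move=> x s [Mx [L Lmin Lx]] Es; split; first exact: Mr.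
    by exists [set l \o s | l in L]; [exact: minL_right | exists x].
move=> m Mm; have : (M `&` K) m by rewrite KM.
by case.
Qed.
End Semi.

Section Flow.
Variables (T : numDomainType) (X : uniformType).
Local Notation PT := {ptws X -> X}.
Hypothesis hX : hausdorff_space X.
Hypothesis cX : compact [set: X].
Variable alpha : T -> X -> X.
Hypothesis halpha : is_flow alpha.

Let Env (P : set T) : set (X -> X) := envelope alpha P.

Lemma aD s t : alpha (s + t) = alpha s \o alpha t.
Proof. by case: halpha => _ [+ _]. Qed.
Lemma a0 : alpha 0 = id.
Proof. by case: halpha => _ []. Qed.
Lemma acont t : continuous (alpha t).
Proof. by case: halpha => /(_ t) []. Qed.

Lemma gen_env (P : set T) t : P t -> Env P (alpha t).
Proof. by move=> Pt; apply: subset_closure; exists t. Qed.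

Lemma env_sub (P Q : set T) : P `<=` Q -> Env P `<=` Env Q.
Proof. move=> PQ; rewrite /Env /envelope; apply: (@closureS PT) => _ [t Pt <-]; exists t => //; exact: PQ. Qed.

Lemma env_closed P : closed (Env P : set PT).
Proof. exact: closed_closure. Qed.

Lemma central P t p : Env P p -> alpha t \o p = p \o alpha t.
Proof.
move=> /(env_sub (@subsetT _ P)) Ep.
have H := @closure_eq_cont PT PT (fun p : PT => (alpha t \o p : PT)) (fun p : PT => (p \o alpha t : PT))
   [set (alpha s : PT) | s in setT] (ptws_hausdorff hX) (lcomp_cont (@acont t)) (@rcomp_cont X (alpha t)).
apply: (H _ p Ep).
by move=> _ [s _ <-] /=; rewrite -!aD addrC.
Qed.

Lemma env_sg (P : set T) : (forall s t, P s -> P t -> P (s + t)) ->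
  forall p q, Env P p -> Env P q -> Env P (p \o q).
Proof.
move=> Padd p q Ep Eq.
have step : forall t, P t -> Env P (alpha t \o q).
  move=> t Pt.
  have H := @closure_image_sub PT PT (fun p : PT => (alpha t \o p : PT)) [set (alpha s : PT) | s in P] (Env P) (lcomp_cont (@acont t)) (@env_closed P).
  apply: (H _ q Eq).
  by move=> _ [s Ps <-] /=; rewrite -aD; apply: gen_env; exact: Padd.
have H := @closure_image_sub PT PT (fun p : PT => (p \o q : PT)) [set (alpha s : PT) | s in P] (Env P) (@rcomp_cont X q) (@env_closed P).
apply: (H _ p Ep).
by move=> _ [s Ps <-]; exact: step.
Qed.

Section Generic.
Variable P : set T.
Hypothesis Padd : forall s t, P s -> P t -> P (s + t).
Hypothesis P0 : P 0.
Hypothesis Ptot : forall t, P t \/ P (- t).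
Variable Mp : set (X -> X).
Hypothesis hMp : minimal_two_sided_ideal (Env P) Mp.

Lemma shift t i : Mp i -> Mp (alpha t \o i).
Proof.
case: hMp => [[[[i0 Mi0] [MpE Mpl]] Mpr] Mpmin] Mi.
case: (Ptot t) => Pt; first by apply: Mpl => //; exact: gen_env.
pose J := [set alpha (- t) \o j | j in Mp].
have JMp : J = Mp.
  apply: Mpmin; last by move=> _ [j Mj <-]; apply: Mpl => //; exact: gen_env.
  split; [split; [|split]|].
  - by exists (alpha (- t) \o i0); exists i0.
  - by move=> _ [j Mj <-]; apply: (MpE _); apply: Mpl => //; exact: gen_env.
  - move=> s _ Es [j Mj <-]; exists (s \o j); first exact: Mpl.
    have e := central (- t) Es.
    change (alpha (- t) \o (s \o j) = (s \o alpha (- t)) \o j); rewrite -e; reflexivity.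
  - move=> _ s [j Mj <-] Es; exists (j \o s); first exact: Mpr.
    reflexivity.
have : J i by rewrite JMp.
case=> j Mj <-; change (Mp ((alpha t \o alpha (- t)) \o j)).
by rewrite -aD subrr a0.
Qed.

Lemma Mp_left : left_ideal (Env setT) Mp.
Proof.
case: hMp => [[[[i0 Mi0] [MpE Mpl]] Mpr] Mpmin].
split; first by exists i0.
split; first by move=> x /MpE; apply: env_sub.
move=> s i Es Mi.
pose J := [set x | exists a b, [/\ Mp a, Mp b & x = a \o b]].
have JMp : J = Mp.
  apply: Mpmin; last by move=> _ [a [b [Ma Mb ->]]]; apply: (Mpl _ _) => //; exact: MpE.
  split; [split; [|split]|].
  - by exists (i0 \o i0); exists i0, i0.
  - by move=> y [a [b [Ma Mb ->]]]; apply: (MpE _); apply: (Mpl _ _) => //; exact: MpE.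
  - move=> s' _ Es' [a [b [Ma Mb ->]]]; exists (s' \o a), b; split => //; exact: Mpl.
  - move=> _ s' [a [b [Ma Mb ->]]] Es'; exists a, (b \o s'); split => //; exact: Mpr.
have : J i by rewrite JMp.
case=> a [b [Ma Mb ->]].
have Esa : Env P (s \o a).
  have H := @closure_image_sub PT PT (fun p : PT => (p \o a : PT)) [set (alpha s : PT) | s in setT] (Env P) (@rcomp_cont X a) (@env_closed P).
  apply: (H _ s Es).
  by move=> _ [t _ <-]; apply: (MpE _); exact: shift.
exact: (Mpl (s \o a) b Esa Mb).
Qed.

Lemma Mp_sub_M M : minimal_two_sided_ideal (Env setT) M -> Mp `<=` M.
Proof.
move=> [[[[m0 Mm0] [ME Ml]] Mr] _].
have [[[i0 Mi0] [MpE Mpl]] Mpr] := hMp.1.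
have [_ [_ MpL]] := Mp_left.
have EPT : Env P `<=` Env setT by apply: env_sub.
have -> : Mp = M `&` Mp.
  apply/esym/hMp.2; last by move=> x [].
  split; [split; [|split]|].
  - exists (m0 \o i0); split; first by apply: Mr => //; exact/EPT/MpE.
    by apply: MpL => //; exact: ME.
  - by move=> x [_ /MpE].
  - move=> s x Es [Mx Mpx]; split; [apply: Ml => //; exact: EPT | exact: Mpl].
  - move=> x s [Mx Mpx] Es; split; [apply: Mr => //; exact: EPT | exact: Mpr].
by move=> x [].
Qed.
End Generic.
End Flow.


Lemma env_cover (T : numDomainType) (X : uniformType) (alpha : T -> X -> X) :
  (forall t : T, 0 <= t \/ t <= 0) ->
  envelope alpha setT `<=` envelope alpha [set t | 0 <= t] `|` envelope alpha [set t | t <= 0].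
Proof.
move=> tot; rewrite /envelope -closureU; apply: closureS => _ [t _ <-].
by case: (tot t) => h; [left|right]; exists t.
Qed.

Unset Implicit Arguments.
Set Strict Implicit.

Theorem corollary3p8 (R : realType) (T : numDomainType)
  (hT : T = (int : numDomainType) \/ T = (R : numDomainType))
  (X : pseudoMetricType R) (hX : hausdorff_space X) (cX : compact [set: X])
  (alpha : T -> X -> X) (halpha : is_flow alpha)
  (M Mp Mm : set (X -> X))
  (hM : minimal_two_sided_ideal (envelope alpha setT) M)
  (hMp : minimal_two_sided_ideal (envelope alpha [set t | 0 <= t]) Mp)
  (hMm : minimal_two_sided_ideal (envelope alpha [set t | t <= 0]) Mm) :
  M = Mp `|` Mm
  /\ left_ideal (envelope alpha setT) Mp
  /\ left_ideal (envelope alpha setT) Mm.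
Proof.
have tot : forall t : T, 0 <= t \/ t <= 0.
  case: hT => eT; subst T => t.
    by case/orP: (le_total 0 t) => h; [left|right].
  by move: (le_total 0 t) => /orP [h|h]; [left|right]; exact: h.
have Ptot : forall t : T, 0 <= t \/ 0 <= - t.
  by move=> t; case: (tot t) => h; [left|right; rewrite oppr_ge0].
have Ntot : forall t : T, t <= 0 \/ - t <= 0.
  by move=> t; case: (tot t) => h; [right; rewrite oppr_le0|left].
have MpL := Mp_left hX halpha Ptot hMp.
have MmL := Mp_left hX halpha Ntot hMm.
split; last by split.
have sgE : forall p q, envelope alpha setT p -> envelope alpha setT q -> envelope alpha setT (p \o q).
  by apply: (env_sg halpha) => s t _ _.
have nE : envelope alpha setT !=set0.
  by exists (alpha 0); apply: subset_closure; exists 0.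
have clE : closed (envelope alpha setT : set {ptws X -> X}) by exact: closed_closure.
apply/seteqP; split; last first.
  move=> x [Mpx|Mmx]; [exact: (Mp_sub_M hX halpha Ptot hMp hM) | exact: (Mp_sub_M hX halpha Ntot hMm hM)].
move=> m Mm0.
have [L Lmin Lm] := M_in_minL sgE nE hX cX clE hM Mm0.
have key : forall (P : set T) (Mq : set (X -> X)),
    minimal_two_sided_ideal (envelope alpha P) Mq ->
    left_ideal (envelope alpha setT) Mq -> envelope alpha P m -> Mq m.
  move=> P Mq [[[[k Mk] [MqE _]] Mqr] _] [_ [MqTE MqL]] Pm.
  have My : Mq (k \o m) by exact: Mqr.
  have Ly : L (k \o m) by apply: Lmin.1.2.2 => //; exact: MqTE.
  move: Lm; rewrite (minL_gen sgE Lmin Ly) => -[e Ee <-].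
  exact: MqL.
have Em : envelope alpha setT m by exact: hM.1.1.2.1.
case: (env_cover tot Em) => h; [left; exact: (key _ _ hMp MpL h) | right; exact: (key _ _ hMm MmL h)].
Qed.
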